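(* Let $k\in\mathbb{Z}$, let $m$ be an odd positive integer, and let $p>1$ be an odd integer. Then $$m^{p}T_{p}^{(k)}(1,m)=\sum_{i=0}^{p}\binom{p}{i}E_{p-i}^{(k)}(1)E_{i}m^{p-i}+\sum_{i=1}^{p}\binom{p}{i-1}\big(E_{p-i+1}^{(k)}(1)-E_{p-i+1}^{(k)}\big)m^{p-i}E_{i}+2\sum_{\nu=0}^{p}\binom{p}{\nu}E_{\nu}^{(k)}E_{p+1-\nu}m^{\nu-1}.$$
   Context: Euler polynomials $E_n(x)$ are defined by $\frac{2}{e^t+1}e^{xt}=\sum_{n=0}^{\infty}E_n(x)\frac{t^n}{n!}$ and $E_n=E_n(0)$. For $k\in\mathbb{Z}$, $\mathrm{Ei}_k(x)=\sum_{n=1}^{\infty}\frac{x^n}{n^k(n-1)!}$; the poly-Genocchi polynomials $G_n^{(k)}(x)$ are defined by $\frac{2\,\mathrm{Ei}_k(\log(1+t))}{e^t+1}e^{xt}=\sum_{n=0}^{\infty}G_n^{(k)}(x)\frac{t^n}{n!}$; the poly-Euler polynomials are $E_n^{(k)}(x)=\frac{G_{n+1}^{(k)}(x)}{n+1}$ ($n\ge0$), $E_n^{(k)}=E_n^{(k)}(0)$, and the poly-Euler functions are $\overline{E}_n^{(k)}(x)=E_n^{(k)}(x-[x])$, where $[x]$ is the greatest integer $\le x$. For positive integers $h,m,p$, the poly-Dedekind type DC sum is $T_p^{(k)}(h,m)=2\sum_{\mu=1}^{m-1}(-1)^{\mu}\frac{\mu}{m}\overline{E}_p^{(k)}\big(\frac{h\mu}{m}\big)$.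 *)

(* Defs.v *)
(* Formal power series over a realType R are represented by
   their coefficient sequences (nat -> R): s n is the coefficient of t^n. *)
From mathcomp Require Import all_boot all_order all_algebra.
From mathcomp Require Import all_classical all_reals.
Unset Printing Implicit Defensive.
Import Order.TTheory GRing.Theory Num.Theory.
Local Open Scope ring_scope.

Section FPS.
Variable R : realType.

Definition fps_mul (a b : nat -> R) : nat -> R :=
  fun n => \sum_(i < n.+1) a i * b (n - i)%N.

Definition fps_pow (a : nat -> R) (j : nat) : nat -> R :=
  iter j (fps_mul a) (fun n => if n == 0%N then 1 else 0).

(* composition f(g(t)), meaningful when g 0 = 0 *)
Definition fps_comp (f g : nat -> R) : nat -> R :=
  fun n => \sum_(j < n.+1) f j * fps_pow g j n.

(* multiplicative inverse of a formal power series with a 0 != 0 *)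
Fixpoint fps_inv_aux (a : nat -> R) (n : nat) : seq R :=
  match n with
  | 0%N => [:: (a 0%N)^-1]
  | n'.+1 => let s := fps_inv_aux a n' in
      rcons s (- (a 0%N)^-1 * \sum_(1 <= j < n.+1) a j * nth 0 s (n - j)%N)
  end.
Definition fps_inv (a : nat -> R) : nat -> R := fun n => nth 0 (fps_inv_aux a n) n.

Definition fps_exp (x : R) : nat -> R := fun n => x ^+ n / (n`!)%:R.

(* 2 / (e^t + 1) *)
Definition fps_euler : nat -> R :=
  fps_inv (fun n => (fps_exp 1 n + (if n == 0%N then 1 else 0)) / 2).

Definition fps_log1p : nat -> R :=
  fun n => if n == 0%N then 0 else (-1) ^+ n.-1 / n%:R.

Definition fps_Ei (k : int) : nat -> R :=
  fun n => if n == 0%N then 0 else ((n%:R : R) ^ k)^-1 / ((n.-1)`!)%:R.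

(* Euler polynomials: 2/(e^t+1) e^{xt} = sum E_n(x) t^n/n! *)
Definition EulerPoly (n : nat) (x : R) : R :=
  (n`!)%:R * fps_mul fps_euler (fps_exp x) n.
Definition EulerNum (n : nat) : R := EulerPoly n 0.

(* poly-Genocchi polynomials:
   2 Ei_k(log(1+t))/(e^t+1) e^{xt} = sum G_n^{(k)}(x) t^n/n! *)
Definition polyGenocchi (k : int) (n : nat) (x : R) : R :=
  (n`!)%:R *
  fps_mul (fps_mul (fun j => 2 * fps_comp (fps_Ei k) fps_log1p j) fps_euler)
          (fps_exp x) n.

Definition polyEuler (k : int) (n : nat) (x : R) : R :=
  polyGenocchi k n.+1 x / (n.+1)%:R.
Definition polyEulerNum (k : int) (n : nat) : R := polyEuler k n 0.

Definition polyEulerFun (k : int) (n : nat) (x : R) : R :=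
  polyEuler k n (x - (Num.floor x)%:~R).

Definition polyDC (k : int) (p h m : nat) : R :=
  2 * \sum_(1 <= mu < m) (-1) ^+ mu * (mu%:R / m%:R)
        * polyEulerFun k p (h%:R * mu%:R / m%:R).

End FPS.

(* Main.v *)
Require Import Defs.
From mathcomp Require Import all_boot all_order all_algebra.
From mathcomp Require Import all_classical all_reals.
From mathcomp Require Import ring lra zify.
Import Order.TTheory GRing.Theory Num.Theory.
Local Open Scope ring_scope.

Section Aux.
Variable R : realType.

Lemma size_inv_aux (a : nat -> R) n : size (fps_inv_aux R a n) = n.+1.
Proof. by elim: n => [|n IH] //=; rewrite size_rcons IH. Qed.

Lemma nth_inv_aux (a : nat -> R) n j : (j <= n)%N ->
  nth 0 (fps_inv_aux R a n) j = fps_inv R a j.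
Proof.
elim: n => [|n IH] Hj.
  by rewrite leqn0 in Hj; move/eqP: Hj => ->.
rewrite /= nth_rcons size_inv_aux.
case: ifP => Hjn; first by apply: IH; lia.
have -> : j = n.+1 by lia.
by rewrite eqxx /fps_inv /= nth_rcons size_inv_aux ltnn eqxx.
Qed.

Lemma fps_invS (a : nat -> R) n : fps_inv R a n.+1 =
  - (a 0%N)^-1 * \sum_(1 <= j < n.+2) a j * fps_inv R a (n.+1 - j)%N.
Proof.
rewrite /fps_inv /= nth_rcons size_inv_aux ltnn eqxx.
congr (_ * _); apply: eq_big_nat => j /andP[Hj1 Hj2].
by rewrite nth_inv_aux //; lia.
Qed.

Lemma fps_inv_mul (a : nat -> R) n : a 0%N != 0 ->
  \sum_(i < n.+1) a i * fps_inv R a (n - i)%N = (n == 0%N)%:R.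
Proof.
move=> a0; case: n => [|n].
  by rewrite big_ord1 /fps_inv /= divff.
rewrite big_ord_recl /= subn0 fps_invS mulrA mulrN divff // mulN1r.
rewrite big_add1 /= big_mkord.
rewrite [X in - _ + X](eq_bigr (fun i : 'I_ _ => a i.+1 * fps_inv R a (n.+1 - i.+1)%N)).
  by rewrite addNr.
by move=> i _.
Qed.

Lemma natf_neq0 n : (n`!)%:R != 0 :> R.
Proof. by rewrite pnatr_eq0 -lt0n fact_gt0. Qed.

Lemma appell (c : nat -> R) x n : (n`!)%:R * fps_mul R c (fps_exp R x) n =
  \sum_(i < n.+1) 'C(n, i)%:R * ((i`!)%:R * c i) * x ^+ (n - i).
Proof.
rewrite /fps_mul mulr_sumr; apply: eq_bigr => i _; rewrite /fps_exp.
have Hi : (i <= n)%N by rewrite -ltnS.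
rewrite -(bin_fact Hi) !natrM.
have := natf_neq0 (n - i); move=> H.
by field.
Qed.

Lemma sum_at0 (F : nat -> R) n :
  \sum_(i < n.+1) F i * 0 ^+ (n - i) = F n.
Proof.
rewrite big_ord_recr /= subnn expr0 mulr1 big1 ?add0r // => i _.
rewrite expr0n /=; have -> : (n - i == 0)%N = false by case: i => /= i Hi; lia.
by rewrite mulr0.
Qed.

Lemma eulnum n : EulerNum R n = (n`!)%:R * fps_euler R n.
Proof.
rewrite /EulerNum /EulerPoly appell (sum_at0 (fun i => 'C(n, i)%:R * ((i`!)%:R * fps_euler R i))).
by rewrite binn mul1r.
Qed.

Lemma eulpoly n x : EulerPoly R n x =
  \sum_(i < n.+1) 'C(n, i)%:R * EulerNum R i * x ^+ (n - i).
Proof. by rewrite /EulerPoly appell; apply: eq_bigr => i _; rewrite eulnum. Qed.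

Definition gam k i := (i`!)%:R *
  fps_mul R (fun j => 2 * fps_comp R (fps_Ei R k) (fps_log1p R) j) (fps_euler R) i.

Lemma gam0 k : gam k 0 = 0.
Proof.
by rewrite /gam /fps_mul big_ord1 /fps_comp big_ord1 /fps_Ei /= !(mul0r, mulr0).
Qed.

Lemma genocchi k n x : polyGenocchi R k n x =
  \sum_(i < n.+1) 'C(n, i)%:R * gam k i * x ^+ (n - i).
Proof. by rewrite /polyGenocchi appell. Qed.

Lemma pEnum k n : polyEulerNum R k n = gam k n.+1 / (n.+1)%:R.
Proof.
rewrite /polyEulerNum /polyEuler genocchi.
by rewrite (sum_at0 (fun i => 'C(n.+1, i)%:R * gam k i)) binn mul1r.
Qed.

Lemma pEpoly k n x : polyEuler R k n x =
  \sum_(j < n.+1) 'C(n, j)%:R * polyEulerNum R k j * x ^+ (n - j).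
Proof.
rewrite /polyEuler genocchi big_ord_recl gam0 mulr0 mul0r add0r mulr_suml.
apply: eq_bigr => i _; rewrite pEnum /bump /= subSS.
have H := mul_bin_diag n.+1 i; rewrite /= in H.
have Hn : (n.+1)%:R != 0 :> R by rewrite pnatr_eq0.
have Hi : (i.+1)%:R != 0 :> R by rewrite pnatr_eq0.
have H' : (n.+1)%:R * 'C(n, i)%:R = (i.+1)%:R * 'C(n.+1, i.+1)%:R :> R.
  by rewrite -!natrM H.
have -> : bump 0 i = i.+1 by rewrite /bump leq0n.
have E : 'C(n.+1, i.+1)%:R = (n.+1)%:R * 'C(n, i)%:R / (i.+1)%:R :> R.
  by rewrite H' [_ * 'C(_,_)%:R]mulrC mulfK.
rewrite E; field.
by rewrite !(addrC 1) !natr1 Hi Hn.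
Qed.

Lemma fps_mulC (a b : nat -> R) n : fps_mul R a b n = fps_mul R b a n.
Proof.
rewrite /fps_mul (reindex_inj rev_ord_inj) /=; apply: eq_bigr => i _.
have Hi : (i <= n)%N by case: i => /= i Hi; lia.
by rewrite subSS (subKn Hi) mulrC.
Qed.

Lemma eul_rec n : \sum_(i < n.+1) 'C(n, i)%:R * EulerNum R i + EulerNum R n
   = 2 * (n == 0%N)%:R.
Proof.
pose b := (fun n => (fps_exp R 1 n + (if n == 0%N then 1 else 0)) / 2 : R).
have b0 : b 0%N != 0.
  rewrite /b /fps_exp expr0 fact0 divr1 eqxx.
  have two : (2%:R : R) != 0 by rewrite pnatr_eq0.
  rewrite /=. have -> : (1 + 1 : R) = 2 by [].
  rewrite divff ?oner_neq0 ?pnatr_eq0. exact: isT. by [].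
have H := fps_inv_mul b n b0.
have E1 : \sum_(i < n.+1) 'C(n, i)%:R * EulerNum R i =
    (n`!)%:R * fps_mul R (fps_euler R) (fps_exp R 1) n.
  by rewrite appell; apply: eq_bigr => i _; rewrite expr1n mulr1 eulnum.
have E3 : fps_mul R (fps_euler R) (fun n => if n == 0%N then 1 else 0) n = fps_euler R n.
  rewrite /fps_mul big_ord_recr /= subnn eqxx mulr1 big1 ?add0r // => i _.
  have -> : (n - i == 0)%N = false by case: i => /= i Hi; lia.
  by rewrite mulr0.
have E2 : fps_mul R (fps_euler R) (fps_exp R 1) n +
    fps_mul R (fps_euler R) (fun n => if n == 0%N then 1 else 0) n =
    2 * fps_mul R (fps_euler R) b n.
  rewrite /fps_mul mulr_sumr -big_split /=.
  apply: eq_bigr => i _; rewrite /b.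
  have h2 : (2:R) != 0 by rewrite pnatr_eq0.
  by rewrite [RHS]mulrCA [2 * (_ / 2)]mulrCA divff // mulr1 mulrDr.
have H' : fps_mul R (fps_euler R) b n = (n == 0%N)%:R by rewrite fps_mulC; exact: H.
rewrite E1 eulnum -mulrDr -E3 E2 H'.
by case: n {H H' E1 E2 E3} => [|n] /=; rewrite ?fact0 ?mul1r ?mulr0.
Qed.

Lemma widen_tri (G : nat -> R) p j : (j <= p)%N ->
  \sum_(0 <= i < (p - j).+1) G i = \sum_(0 <= i < p.+1 | (i + j <= p)%N) G i.
Proof.
move=> hj; rewrite (@big_nat_widen _ _ _ 0 (p - j).+1 p.+1); last by rewrite ltnS leq_subr.
by apply: eq_bigl => i /=; apply/idP/idP; lia.
Qed.

Lemma tri_exch (F : nat -> nat -> R) p :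
  \sum_(0 <= j < p.+1) \sum_(0 <= i < (p - j).+1) F j i =
  \sum_(0 <= i < p.+1) \sum_(0 <= j < (p - i).+1) F j i.
Proof.
rewrite (eq_big_nat _ _ (F2 := fun j => \sum_(0 <= i < p.+1)
   (if (i + j <= p)%N then F j i else 0))); last first.
  by move=> j hj; rewrite widen_tri ?big_mkcond //; lia.
rewrite [RHS](eq_big_nat _ _ (F2 := fun i => \sum_(0 <= j < p.+1)
   (if (i + j <= p)%N then F j i else 0))); last first.
  move=> i hi; rewrite widen_tri ?big_mkcond; last by lia.
  by apply: eq_bigr => j _; rewrite addnC.
exact: exchange_big_nat.
Qed.

Lemma trin p i j : ('C(p, j) * 'C(p - j, i) = 'C(p, i) * 'C(p - i, j))%N.
Proof.
case: (leqP (i + j) p) => h; last first.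
  have -> : ('C(p, j) * 'C(p - j, i) = 0)%N.
    case: (leqP j p) => hj; last by rewrite (bin_small hj).
    by rewrite (bin_small (n := p - j)) ?muln0 //; lia.
  have -> : ('C(p, i) * 'C(p - i, j) = 0)%N.
    case: (leqP i p) => hi; last by rewrite (bin_small hi).
    by rewrite (bin_small (n := p - i)) ?muln0 //; lia.
  by [].
have K : (0 < i`! * j`! * (p - i - j)`!)%N by rewrite !muln_gt0 !fact_gt0.
apply/eqP; rewrite -(eqn_pmul2r K); apply/eqP.
have e1 := bin_fact (_ : (j <= p)%N).
have e2 := bin_fact (_ : (i <= p - j)%N).
have e3 := bin_fact (_ : (i <= p)%N).
have e4 := bin_fact (_ : (j <= p - i)%N).
have s : (p - j - i = p - i - j)%N by lia.
transitivity (p`!).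
  rewrite -e1; last by lia.
  rewrite -e2 ?s; last by lia.
  ring.
rewrite -e3; last by lia.
rewrite -e4; last by lia.
ring.
Qed.
End Aux.


Section Aux2.
Variable R : realType.

Lemma sum_rev (F : nat -> R) r :
  \sum_(0 <= i < r.+1) F i = \sum_(0 <= l < r.+1) F (r - l)%N.
Proof.
rewrite big_nat_rev; apply: eq_big_nat => i hi.
by rewrite add0n subSS.
Qed.

Lemma eul_rec' n : \sum_(0 <= i < n.+1) 'C(n, i)%:R * EulerNum R i =
   2 * (n == 0%N)%:R - EulerNum R n.
Proof. by rewrite big_mkord -(eul_rec R n) addrK. Qed.

Lemma eulpolyN n x : EulerPoly R n x =
  \sum_(0 <= i < n.+1) 'C(n, i)%:R * EulerNum R i * x ^+ (n - i).
Proof. by rewrite eulpoly big_mkord. Qed.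

Lemma exprD1nN (x : R) n : (x + 1) ^+ n = \sum_(0 <= i < n.+1) x ^+ i *+ 'C(n, i).
Proof. by rewrite exprD1n big_mkord. Qed.

Lemma eulpoly_shift r x :
  EulerPoly R r (x + 1) + EulerPoly R r x = 2 * x ^+ r.
Proof.
rewrite !eulpolyN.
under eq_bigr do rewrite exprD1nN mulr_sumr.
rewrite (eq_big_nat _ _ (F2 := fun i => \sum_(0 <= l < (r - i).+1)
    'C(r, i)%:R * EulerNum R i * (x ^+ l *+ 'C(r - i, l)))); last first.
  by move=> i hi.
rewrite tri_exch.
rewrite (eq_big_nat _ _ (F2 := fun l => 'C(r, l)%:R * x ^+ l *
    (2 * ((r - l)%N == 0%N)%:R - EulerNum R (r - l)%N))); last first.
  move=> l hl; rewrite -eul_rec' mulr_sumr; apply: eq_big_nat => i hi.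
  have T : 'C(r, i)%:R * 'C((r - i)%N, l)%:R = 'C(r, l)%:R * 'C((r - l)%N, i)%:R :> R.
    by rewrite -!natrM trin.
  rewrite -mulr_natr.
  transitivity ('C(r, i)%:R * 'C((r - i)%N, l)%:R * EulerNum R i * x ^+ l); first ring.
  rewrite T; ring.
rewrite [X in _ + X]sum_rev -big_split /=.
rewrite big_nat_recr //= subnn eqxx big1_seq ?add0r.
  by rewrite binn bin0 subn0 /=; ring.
move=> l /andP[_]; rewrite mem_index_iota => /andP[_ hl].
have -> : (r - l == 0)%N = false by lia.
rewrite bin_sub; last by lia.
have -> : (r - (r - l) = l)%N by lia.
rewrite /=; ring.
Qed.
End Aux2.


Section Aux3.
Variable R : realType.

Lemma altsum r n : 2 * \sum_(0 <= mu < n) (-1) ^+ mu * (mu%:R : R) ^+ r =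
  EulerNum R r - (-1) ^+ n * EulerPoly R r n%:R.
Proof.
elim: n => [|n IH].
  by rewrite big_geq // mulr0 expr0 mul1r /EulerNum subrr.
rewrite big_nat_recr //= mulrDr IH.
have := eulpoly_shift R r n%:R => H.
have E : EulerPoly R r n.+1%:R = 2 * n%:R ^+ r - EulerPoly R r n%:R.
  by rewrite -H -[(n.+1)%:R]natr1 addrK.
rewrite E exprS; ring.
Qed.

Lemma altsum_odd r m : odd m -> 2 * \sum_(0 <= mu < m) (-1) ^+ mu * (mu%:R : R) ^+ r =
  EulerNum R r + EulerPoly R r m%:R.
Proof.
move=> hm; rewrite altsum -signr_odd hm expr1; ring.
Qed.
End Aux3.


Lemma lhs_expand (R : realType) (k : int) (m p : nat) : (0 < m)%N ->
  (m%:R : R) ^+ p * polyDC R k p 1 m =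
  \sum_(0 <= j < p.+1) 'C(p, j)%:R * polyEulerNum R k j * (m%:R : R) ^ (j%:Z - 1)
     * (2 * \sum_(0 <= mu < m) (-1) ^+ mu * (mu%:R : R) ^+ (p - j).+1).
Proof.
move=> m0.
set M := (m%:R : R).
have M0 : M != 0 by rewrite pnatr_eq0 -lt0n.
have Mgt : 0 < M by rewrite ltr0n.
rewrite /polyDC.
rewrite (eq_big_nat _ _ (F2 := fun mu => (-1) ^+ mu * (mu%:R / M) *
   \sum_(0 <= j < p.+1) 'C(p, j)%:R * polyEulerNum R k j * (mu%:R / M) ^+ (p - j))); last first.
  move=> mu /andP[h1 h2]; rewrite mul1r /polyEulerFun.
  have -> : Num.floor (mu%:R / M) = 0.
    apply: floor_def; rewrite /= add0r mulr1z.
    rewrite divr_ge0 ?ler0n ?ltW //=.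
    by rewrite ltr_pdivrMr // mul1r ltr_nat.
  by rewrite subr0 pEpoly big_mkord.
rewrite (_ : \sum_(1 <= i < m) _ = \sum_(0 <= i < m) ((-1) ^+ i * (i%:R / M) *
   \sum_(0 <= j < p.+1) 'C(p, j)%:R * polyEulerNum R k j * (i%:R / M) ^+ (p - j))); last first.
  by rewrite [RHS](big_ltn m0) /= mul0r mulr0 mul0r add0r.
under eq_bigr do rewrite mulr_sumr.
rewrite mulr_sumr mulr_sumr.
under eq_bigr do rewrite !mulr_sumr.
rewrite exchange_big_nat /=.
apply: eq_big_nat => j /andP[_ hj].
rewrite !mulr_sumr; apply: eq_bigr => mu _.
have Mj : M ^ (j%:Z - 1) = M ^+ j / M by rewrite expfzDr // exprN1.
have Mp : M ^+ p = M ^+ j * M ^+ (p - j) by rewrite -exprD subnKC // -ltnS.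
have Mpj : M ^+ (p - j) != 0 by rewrite expf_neq0.
rewrite Mj Mp expr_div_n exprS.
field.
by rewrite M0 Mpj.
Qed.


Lemma pascal n i : 'C(n.+1, i) = ('C(n, i) + (if i is i'.+1 then 'C(n, i') else 0))%N.
Proof. by case: i => [|i]; rewrite ?bin0 ?binS. Qed.

Lemma pEpolyN (R : realType) k n x : polyEuler R k n x =
  \sum_(0 <= j < n.+1) 'C(n, j)%:R * polyEulerNum R k j * x ^+ (n - j).
Proof. by rewrite pEpoly big_mkord. Qed.

Lemma pEdiff (R : realType) k n : polyEuler R k n.+1 1 - polyEulerNum R k n.+1 =
  \sum_(0 <= j < n.+1) 'C(n.+1, j)%:R * polyEulerNum R k j.
Proof.
rewrite pEpolyN big_nat_recr //= subnn binn expr0.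
under eq_bigr do rewrite expr1n mulr1.
rewrite /=; ring.
Qed.

Lemma key (R : realType) (k : int) (p : nat) (M : R) :
  \sum_(0 <= j < p.+1) \sum_(0 <= i < (p - j).+1)
     'C(p, j)%:R * polyEulerNum R k j * 'C((p - j).+1, i)%:R * EulerNum R i * M ^+ (p - i)
  = \sum_(0 <= i < p.+1)
       'C(p, i)%:R * polyEuler R k (p - i) 1 * EulerNum R i * M ^+ (p - i)
  + \sum_(1 <= i < p.+1)
       'C(p, i.-1)%:R * (polyEuler R k (p - i).+1 1 - polyEulerNum R k (p - i).+1)
         * M ^+ (p - i) * EulerNum R i.
Proof.
have sp : forall j, \sum_(0 <= i < (p - j).+1)
     'C(p, j)%:R * polyEulerNum R k j * 'C((p - j).+1, i)%:R * EulerNum R i * M ^+ (p - i)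
  = \sum_(0 <= i < (p - j).+1)
     'C(p, j)%:R * polyEulerNum R k j * 'C(p - j, i)%:R * EulerNum R i * M ^+ (p - i)
  + \sum_(0 <= i < (p - j).+1)
     'C(p, j)%:R * polyEulerNum R k j * (if i is i'.+1 then 'C(p - j, i') else 0)%:R
        * EulerNum R i * M ^+ (p - i).
  move=> j; rewrite -big_split; apply: eq_bigr => i _ /=.
  by rewrite pascal natrD; ring.
rewrite (eq_bigr _ (fun j _ => sp j)) big_split /=.
rewrite [X in X + _ = _]tri_exch [X in _ + X = _]tri_exch.
congr (_ + _).
  apply: eq_big_nat => i /andP[_ hi].
  rewrite pEpolyN mulr_sumr !mulr_suml; apply: eq_big_nat => j /andP[_ hj].
  have T : 'C(p, j)%:R * 'C((p - j)%N, i)%:R = 'C(p, i)%:R * 'C((p - i)%N, j)%:R :> R.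
    by rewrite -!natrM trin.
  rewrite expr1n mulr1.
  transitivity ('C(p, j)%:R * 'C((p - j)%N, i)%:R * polyEulerNum R k j * EulerNum R i * M ^+ (p - i)); first ring.
  rewrite T; ring.
rewrite [X in X = _]big_ltn // big1 ?add0r; last by move=> j _ /=; ring.
apply: eq_big_nat => i /andP[hi1 hi2].
case: i hi1 hi2 => [|i] hi1 hi2; first by [].
rewrite pEdiff.
rewrite mulr_sumr !mulr_suml; apply: eq_big_nat => j /andP[_ hj].
have e : ((p - i.+1).+1 = p - i)%N by lia.
rewrite e.
have T : 'C(p, j)%:R * 'C((p - j)%N, i)%:R = 'C(p, i)%:R * 'C((p - i)%N, j)%:R :> R.
  by rewrite -!natrM trin.
rewrite /=.
transitivity ('C(p, j)%:R * 'C((p - j)%N, i)%:R * polyEulerNum R k j * EulerNum R i.+1 * M ^+ (p - i.+1)); first ring.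
rewrite T; ring.
Qed.


Theorem theorem12 (R : realType) (k : int) (m p : nat) :
  (0 < m)%N -> odd m -> (1 < p)%N -> odd p ->
  (m%:R : R) ^+ p * polyDC R k p 1 m =
    \sum_(0 <= i < p.+1)
       'C(p, i)%:R * polyEuler R k (p - i) 1 * EulerNum R i * (m%:R : R) ^+ (p - i)
  + \sum_(1 <= i < p.+1)
       'C(p, i.-1)%:R * (polyEuler R k (p - i).+1 1 - polyEulerNum R k (p - i).+1)
         * (m%:R : R) ^+ (p - i) * EulerNum R i
  + 2 * \sum_(0 <= nu < p.+1)
       'C(p, nu)%:R * polyEulerNum R k nu * EulerNum R (p.+1 - nu)
         * (m%:R : R) ^ (nu%:Z - 1).
Proof.
move=> m0 hm _ _.
rewrite lhs_expand // -key.
set M := (m%:R : R).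
have M0 : M != 0 by rewrite pnatr_eq0 -lt0n.
rewrite (eq_big_nat _ _ (F2 := fun j =>
   'C(p, j)%:R * polyEulerNum R k j * M ^ (j%:Z - 1) * (2 * EulerNum R (p.+1 - j))
 + \sum_(0 <= i < (p - j).+1)
     'C(p, j)%:R * polyEulerNum R k j * 'C((p - j).+1, i)%:R * EulerNum R i * M ^+ (p - i)));
  last first.
  move=> j /andP[_ hj].
  rewrite altsum_odd // eulpolyN big_nat_recr //= subnn binn expr0 (subSn (_ : j <= p)%N); last by lia.
  rewrite -/M.
  have Mj : M ^ (j%:Z - 1) = M ^+ j / M by rewrite expfzDr // exprN1.
  have HS : 'C(p, j)%:R * polyEulerNum R k j * M ^ (j%:Z - 1) *
     \sum_(0 <= i < (p - j).+1) 'C((p - j).+1, i)%:R * EulerNum R i * M ^+ ((p - j).+1 - i)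
   = \sum_(0 <= i < (p - j).+1)
     'C(p, j)%:R * polyEulerNum R k j * 'C((p - j).+1, i)%:R * EulerNum R i * M ^+ (p - i).
    rewrite mulr_sumr; apply: eq_big_nat => i /andP[_ hi]; rewrite Mj.
    have -> : M ^+ ((p - j).+1 - i) = M * M ^+ (p - j - i).
      by rewrite subSn ?exprS //; lia.
    have -> : M ^+ (p - i) = M ^+ j * M ^+ (p - j - i).
      by rewrite -exprD; congr (_ ^+ _); lia.
    by field.
  rewrite -HS; ring.
have H2 : \sum_(0 <= j < p.+1)
   'C(p, j)%:R * polyEulerNum R k j * M ^ (j%:Z - 1) * (2 * EulerNum R (p.+1 - j))
  = 2 * \sum_(0 <= nu < p.+1)
       'C(p, nu)%:R * polyEulerNum R k nu * EulerNum R (p.+1 - nu) * M ^ (nu%:Z - 1).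
  by rewrite mulr_sumr; apply: eq_bigr => j _; ring.
rewrite big_split /= H2 addrC.
reflexivity.
Qed.
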